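(* Under the standing setting and assumptions (A1)–(A3) described in the context, the following are equivalent: (a) $\mathcal R$ is upper semicontinuous at every point of $\mathcal X$; (b) $\mathcal R(\mathcal K)$ is bounded in $\mathcal M$ for every compact $\mathcal K\subset\mathcal X$; (c) for every $X\in\mathcal X$, every sequence $X_n\to X$ in $\mathcal X$ and every choice $Z_n\in\mathcal R(X_n)$, there exist $Z\in\mathcal R(X)$ and a subsequence $(Z_{n_k})$ with $Z_{n_k}\to Z$.
   Context: Let $\mathcal X$ be a Hausdorff, first countable, locally convex topological vector space over $\mathbb R$, partially ordered by a partial order $\geq$ with positive cone $\mathcal X_+=\{X\in\mathcal X: X\geq 0\}$. Let $\mathcal M\subset\mathcal X$ be a vector subspace with $1<\dim\mathcal M<\infty$, carrying the relative topology (boundedness in $\mathcal M$ refers to any norm on $\mathcal M$), and let $\pi:\mathcal M\to\mathbb R$ be linear. Standing assumptions: (A1) there is $U\in\mathcal M\cap\mathcal X_+$ with $\pi(U)=1$; (A2) $\mathcal A\subsetneq\mathcal X$ is closed, contains $0$, and satisfies $\mathcal A+\mathcal X_+\subset\mathcal A$; (A3) the map $\rho(X)=\inf\{\pi(Z): Z\in\mathcal M,\ X+Z\in\mathcal A\}$ is finitely valued and continuous on $\mathcal X$. The optimal payoff map is $\mathcal R(X)=\{Z\in\mathcal M: X+Z\in\mathcal A,\ \pi(Z)=\rho(X)\}$ and $\mathcal R(\mathcal K)=\bigcup_{X\in\mathcal K}\mathcal R(X)$. $\mathcal R$ is upper semicontinuous at $X$ if for every open $\mathcal U\subset\mathcal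 M$ with $\mathcal R(X)\subset\mathcal U$ there is an open neighborhood $\mathcal U_X$ of $X$ with $\mathcal R(Y)\subset\mathcal U$ for all $Y\in\mathcal U_X$. *)

(* Defs.v *)
From HB Require Import structures.
From mathcomp Require Import all_boot all_order all_algebra.
From mathcomp Require Import all_classical all_reals all_analysis.
Set Implicit Arguments. Unset Strict Implicit. Unset Printing Implicit Defensive.
Import Order.TTheory GRing.Theory Num.Theory numFieldNormedType.Exports.
Local Open Scope classical_set_scope.
Local Open Scope ring_scope.

Definition first_countable (T : topologicalType) : Prop :=
  forall x : T, exists B : nat -> set T,
    (forall n, nbhs x (B n)) /\ (forall U, nbhs x U -> exists n, B n `<=` U).

Definition partial_order (T : Type) (le : T -> T -> Prop) : Prop :=
  (forall x, le x x) /\ (forall x y, le x y -> le y x -> x = y) /\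
  (forall x y z, le x y -> le y z -> le x z).

Definition pos_cone (R : realType) (X : tvsType R) (le : X -> X -> Prop) : set X :=
  [set x | le 0 x].

Definition span_set (R : realType) (X : tvsType R) (n : nat) (b : 'I_n -> X) : set X :=
  [set z | exists c : 'I_n -> R, z = \sum_(i < n) c i *: b i].

Definition lin_indep (R : realType) (X : tvsType R) (n : nat) (b : 'I_n -> X) : Prop :=
  forall c : 'I_n -> R, \sum_(i < n) c i *: b i = 0 -> forall i, c i = 0.

Definition linear_on (R : realType) (X : tvsType R) (M : set X) (pi : X -> R) : Prop :=
  forall (a : R) (y z : X), M y -> M z -> pi (a *: y + z) = a * pi y + pi z.

(* boundedness in M = span_set b, w.r.t. the norm |z| = max_i |c_i| where
   z = \sum_i c_i b_i (a norm on M when b is linearly independent) *)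
Definition bounded_in_span (R : realType) (X : tvsType R) (n : nat) (b : 'I_n -> X)
  (S : set X) : Prop :=
  exists C : R, forall z, S z ->
    exists c : 'I_n -> R, z = \sum_(i < n) c i *: b i /\ forall i, `|c i| <= C.

Definition rho (R : realType) (X : tvsType R) (M A : set X) (pi : X -> R) (x : X) : R :=
  inf [set pi z | z in [set z | M z /\ A (x + z)]].

Definition optR (R : realType) (X : tvsType R) (M A : set X) (pi : X -> R) (x : X) : set X :=
  [set z | M z /\ A (x + z) /\ pi z = rho M A pi x].

Definition optR_set (R : realType) (X : tvsType R) (M A : set X) (pi : X -> R) (K : set X)
  : set X := \bigcup_(x in K) optR M A pi x.

(* upper semicontinuity at x, open sets of M being the relatively open ones V `&` M *)
Definition usc_at (R : realType) (X : tvsType R) (M A : set X) (pi : X -> R) (x : X) : Prop :=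
  forall V : set X, open V -> optR M A pi x `<=` V `&` M ->
    exists W : set X, open W /\ W x /\
      forall y, W y -> optR M A pi y `<=` V `&` M.

(* Main.v *)
Require Import Defs.
From HB Require Import structures.
From mathcomp Require Import all_boot all_order all_algebra.
From mathcomp Require Import all_classical all_reals all_analysis.
From mathcomp Require Import lra.
Import Order.TTheory GRing.Theory Num.Theory numFieldNormedType.Exports.
Local Open Scope classical_set_scope.
Local Open Scope ring_scope.
Set Implicit Arguments. Unset Strict Implicit. Unset Printing Implicit Defensive.

Section generic.
Context {R : realType} {X : tvsType R}.

Lemma tcvgD (T : Type) (F : set_system T) {FF : Filter F} (f g : T -> X) a c :
  f @ F --> a -> g @ F --> c -> (fun x => f x + g x) @ F --> a + c.
Proof.
move=> fa gc; apply: (@continuous2_cvg _ _ _ _ F _ f g (fun u v => u + v) a c) => //.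
exact: (@add_continuous X (a, c)).
Qed.

Lemma tcvgZ (T : Type) (F : set_system T) {FF : Filter F} (s : T -> R) (f : T -> X) (k : R) (a : X) :
  s @ F --> k -> f @ F --> a -> (fun x => s x *: f x) @ F --> k *: a.
Proof.
move=> sk fa; apply: (@continuous2_cvg _ R^o _ _ F _ s f (fun (r : R^o) v => r *: v) k a) => //.
exact: (@scale_continuous R X (k, a)).
Qed.

Lemma tcvg_sum (T : Type) (F : set_system T) {FF : Filter F} (I : Type) (r : seq I)
  (f : T -> I -> X) (l : I -> X) :
  (forall i, (fun x => f x i) @ F --> l i) ->
  (fun x => \sum_(i <- r) f x i) @ F --> \sum_(i <- r) l i.
Proof.
move=> H; elim: r => [|i r IH].
  under eq_fun do rewrite big_nil; rewrite big_nil; exact: cvg_cst.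
rewrite big_cons; under eq_fun do rewrite big_cons; exact: tcvgD.
Qed.

End generic.
Definition sincr (phi : nat -> nat) := {homo phi : k l / (k < l)%N}.

Lemma sincr_ge phi : sincr phi -> forall k, (k <= phi k)%N.
Proof.
move=> h; elim=> [|k IH] //.
by apply: leq_ltn_trans IH (h _ _ (ltnSn k)).
Qed.

Lemma sincr_comp phi psi : sincr phi -> sincr psi -> sincr (phi \o psi).
Proof. by move=> h1 h2 k l kl; apply: h1; apply: h2. Qed.

Lemma sincr_cvg phi : sincr phi -> phi @ \oo --> \oo.
Proof.
move=> h P [N _ PN]; exists N => // m /= Nm; apply: PN.
exact: leq_trans Nm (sincr_ge h m).
Qed.

Lemma cvg_subs {T : topologicalType} (u : nat -> T) (l : T) phi :
  sincr phi -> u @ \oo --> l -> (u \o phi) @ \oo --> l.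
Proof. by move=> h ul; apply: cvg_comp ul; exact: sincr_cvg. Qed.

Lemma incr_sincr (psi : nat -> nat) : increasing_seq psi -> sincr psi.
Proof.
move=> h; apply: homo_ltn => [x y z|k]; first exact: ltn_trans.
rewrite ltnNge; have := h k.+1 k.
change ((psi k.+1 <= psi k)%N = (k.+1 <= k)%N -> ~~ (psi k.+1 <= psi k)%N).
by move=> ->; rewrite ltnn.
Qed.

Lemma bw_multi {R : realType} n (c : nat -> 'I_n -> R) (C : R) :
  (forall k i, `|c k i| <= C) ->
  exists phi, sincr phi /\ exists d : 'I_n -> R,
    forall i, (fun k => c (phi k) i) @ \oo --> d i.
Proof.
move=> hC.
suff H : forall s : seq 'I_n, exists phi, sincr phi /\ exists d : 'I_n -> R,
    forall i, i \in s -> (fun k => c (phi k) i) @ \oo --> d i.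
  have [phi [hphi [d hd]]] := H (enum 'I_n).
  by exists phi; split => //; exists d => i; apply: hd; rewrite mem_enum.
elim=> [|j s [phi [hphi [d hd]]]].
  by exists id; split => // ; exists (fun=> 0).
have bnd : bounded_fun (fun k => c (phi k) j).
  exists C; split; first exact: num_real.
  by move=> M CM y _ /=; apply: le_trans (hC _ _) (ltW CM).
have [psi hpsi cv] := bolzano_weierstrass bnd.
exists (phi \o psi); split; first exact: sincr_comp (incr_sincr hpsi).
exists (fun i => if i == j then lim ((fun k => c (phi k) j) \o psi @ \oo) else d i).
move=> i; rewrite inE; case: eqP => [-> _|_ /= ins].
  exact: cv.
have := cvg_subs (incr_sincr hpsi) (hd i ins). exact.
Qed.


Lemma ler_sum1 {R : realType} {I : finType} (F : I -> R) :
  (forall i, 0 <= F i) -> forall i, F i <= \sum_j F j.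
Proof. by move=> h i; rewrite (bigD1 i) //= lerDl sumr_ge0. Qed.
Arguments ler_sum1 {R I} F _ i.

Lemma rcvg_sum {R : realType} (T : Type) (F : set_system T) {FF : Filter F} (I : Type) (r : seq I)
  (f : T -> I -> R) (l : I -> R) :
  (forall i, (fun x => f x i) @ F --> l i) ->
  (fun x => \sum_(i <- r) f x i) @ F --> \sum_(i <- r) l i.
Proof.
move=> H; elim: r => [|i r IH].
  under eq_fun do rewrite big_nil; rewrite big_nil; exact: cvg_cst.
rewrite big_cons; under eq_fun do rewrite big_cons; exact: cvgD.
Qed.

Lemma ge_cvg (T : topologicalType) (u : nat -> T) (l : T) g :
  (forall k, (k <= g k)%N) -> u @ \oo --> l -> (u \o g) @ \oo --> l.
Proof.
move=> h ul; apply: cvg_comp ul.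
move=> P [N _ PN]; exists N => // m /= Nm; apply: PN.
rewrite /=; exact: leq_trans Nm (h m).
Qed.

Section lin.
Context {R : realType} {X : tvsType R} (n : nat) (b : 'I_n -> X).

Definition lc (c : 'I_n -> R) : X := \sum_(i < n) c i *: b i.

Lemma lc_cvg (c : nat -> 'I_n -> R) d :
  (forall i, (fun k => c k i) @ \oo --> d i) -> (fun k => lc (c k)) @ \oo --> lc d.
Proof.
move=> h; rewrite /lc; apply: (@tcvg_sum R X nat \oo _ 'I_n (index_enum 'I_n) (fun k i => c k i *: b i)) => i.
apply: tcvgZ; [exact: h | exact: cvg_cst].
Qed.

Lemma lcB c d : lc c - lc d = lc (fun i => c i - d i).
Proof. by rewrite /lc -sumrB; apply: eq_bigr => i _; rewrite scalerBl. Qed.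

Lemma lcD c d : lc c + lc d = lc (fun i => c i + d i).
Proof. by rewrite /lc -big_split; apply: eq_bigr => i _; rewrite scalerDl. Qed.

Lemma lcZ a c : a *: lc c = lc (fun i => a * c i).
Proof. by rewrite /lc scaler_sumr; apply: eq_bigr => i _; rewrite scalerA. Qed.

Lemma lc_inj : lin_indep b -> forall c d, lc c = lc d -> forall i, c i = d i.
Proof.
move=> hb c d e i; apply/eqP; rewrite -subr_eq0; apply/eqP.
apply: (hb (fun i => c i - d i)); by rewrite -/(lc _) -lcB e subrr.
Qed.

Definition nrm (c : 'I_n -> R) := \sum_i `|c i|.

Lemma nrm_ge c i : `|c i| <= nrm c.
Proof. by apply: (ler_sum1 (fun i => `|c i|)). Qed.

Lemma nrm_ge0 c : 0 <= nrm c.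
Proof. exact: sumr_ge0. Qed.

Lemma hard (hX : hausdorff_space X) (hb : lin_indep b) (e : nat -> 'I_n -> R) (p : X) :
  (fun k => lc (e k)) @ \oo --> p -> exists D, forall k i, `|e k i| <= D.
Proof.
move=> ep; apply/not_existsP => hD.
have unb : forall D, exists k, D < nrm (e k).
  move=> D; apply/not_existsP => hn; apply: (hD D) => k i.
  by apply: le_trans (nrm_ge _ _) _; rewrite leNgt; apply/negP => hk; exact: (hn k hk).
pose P N := \sum_(k < N) nrm (e k).
have [g hg] := choice (fun j => unb (j.+1%:R + P j)).
have gge : forall j, (j <= g j)%N.
  move=> j; rewrite leqNgt; apply/negP => gj.
  have := hg j; apply/negP; rewrite -leNgt.
  apply: le_trans (_ : P j <= _); last by rewrite lerDr.
  exact: (ler_sum1 (fun k : 'I_j => nrm (e k)) (fun _ => nrm_ge0 _) (Ordinal gj)).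
have mpos : forall j, 0 < nrm (e (g j)).
  by move=> j; apply: le_lt_trans (hg j); rewrite addr_ge0 // sumr_ge0 // => k _; exact: nrm_ge0.
pose f j i := e (g j) i / nrm (e (g j)).
have fb : forall j i, `|f j i| <= 1.
  move=> j i; rewrite /f normrM normfV (gtr0_norm (mpos j)) ler_pdivrMr ?mpos //.
  by rewrite mul1r nrm_ge.
have [phi [hphi [d hd]]] := bw_multi fb.
have l1 : (fun j => lc (f (phi j))) @ \oo --> lc d by apply: lc_cvg.
have inv0 : (fun j => (nrm (e (g j)))^-1) @ \oo --> (0 : R).
  apply/cvgrPdist_lt => eps eps0; near=> j.
  rewrite sub0r normrN gtr0_norm ?invr_gt0 ?mpos //.
  rewrite invf_plt ?posrE ?mpos //.
  apply: (@le_lt_trans _ _ j%:R); first by near: j; exact: nbhs_infty_ger.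
  apply: lt_trans (hg j); apply: (@lt_le_trans _ _ j.+1%:R); first by rewrite ltr_nat.
  by rewrite lerDl sumr_ge0 // => k _; exact: nrm_ge0.
have l2 : (fun j => lc (f j)) @ \oo --> (0 : X).
  have -> : (fun j => lc (f j)) = (fun j => (nrm (e (g j)))^-1 *: lc (e (g j))).
    apply: funext => j; rewrite lcZ /f; congr lc; apply: funext => i; by rewrite mulrC.
  rewrite -(scale0r p); apply: tcvgZ => //.
  have := ge_cvg gge ep; exact.
have l3 := cvg_subs hphi l2.
have d0 : lc d = 0 := cvg_unique hX l1 l3.
have d0' : forall i, d i = 0.
  move=> i; apply: (lc_inj hb) i; by rewrite d0 /lc big1 // => k _; rewrite scale0r.
have s1 : forall j, nrm (f j) = 1.
  move=> j; rewrite /nrm /f; under eq_bigr do rewrite normrM normfV (gtr0_norm (mpos j)).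
  by rewrite -mulr_suml divff // gt_eqF // mpos.
have l4 : (fun j => nrm (f (phi j))) @ \oo --> nrm d.
  apply: rcvg_sum => i; exact: cvg_norm.
have : nrm d = 1.
  apply: (cvg_unique _ l4); first exact: norm_hausdorff.
  rewrite /=; under eq_fun do rewrite s1; exact: cvg_cst.
rewrite /nrm big1 => [|i _]; last by rewrite d0' normr0.
by move/eqP; rewrite eq_sym oner_eq0.
Unshelve. all: by end_near.
Qed.

End lin.


Fixpoint recseq (h : nat -> nat -> nat) (j : nat) : nat :=
  if j is j'.+1 then h j (recseq h j').+1 else h 0 0.

Lemma freq_subseq (Q : nat -> nat -> Prop) :
  (forall j N, exists k, (N <= k)%N /\ Q j k) ->
  exists phi, sincr phi /\ forall j, Q j (phi j).
Proof.
move=> H.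
have [h hh] : exists h : nat -> nat -> nat, forall j N, (N <= h j N)%N /\ Q j (h j N).
  have [h1 hh1] := choice (fun jN : nat * nat => H jN.1 jN.2).
  by exists (fun j N => h1 (j, N)) => j N; exact: (hh1 (j, N)).
exists (recseq h); split; last by case=> [|j] /=; apply: (hh _ _).2.
apply: homo_ltn => [x y z|k]; first exact: ltn_trans.
by rewrite /=; exact: (hh _ _).1.
Qed.

Section topo.
Context {T : topologicalType}.

Lemma fc_base (fcT : first_countable T) (x : T) :
  exists B : nat -> set T, (forall j, nbhs x (B j)) /\
    (forall j k, (j <= k)%N -> B k `<=` B j) /\
    (forall U, nbhs x U -> exists j, B j `<=` U).
Proof.
have [B0 [hB0 hU]] := fcT x.
exists (fun j => [set y | forall i, (i <= j)%N -> B0 i y]); split; [|split].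
- elim=> [|j IH].
    by apply: filterS (hB0 0) => y By i; rewrite leqn0 => /eqP ->.
  apply: filterS (filterI IH (hB0 j.+1)) => y [h1 h2] i.
  by rewrite leq_eqVlt ltnS => /orP[/eqP ->|/h1].
- by move=> j k jk y h i ij; apply: h; exact: leq_trans ij jk.
- move=> U /hU [j BU]; exists j => y h; apply: BU; exact: h.
Qed.

Lemma base_cvg (x : T) (B : nat -> set T) (s : nat -> T) :
  (forall j k, (j <= k)%N -> B k `<=` B j) ->
  (forall U, nbhs x U -> exists j, B j `<=` U) ->
  (forall j, B j (s j)) -> s @ \oo --> x.
Proof.
move=> dec hU hs U /hU [j BU]; exists j => // k /= jk.
by apply: BU; apply: (dec j k jk).
Qed.

Lemma hsep (hT : hausdorff_space T) (p q : T) : p <> q ->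
  exists N, nbhs p N /\ ~ N q.
Proof.
move=> pq; apply/not_existsP => hN; apply: pq; apply: hT => A B pA qB.
exists q; split; last exact: nbhs_singleton.
by apply/not_notP => Aq; apply: (hN A); split.
Qed.

Lemma nbhs_open (x : T) (S : set T) : nbhs x S -> exists W, open W /\ W x /\ W `<=` S.
Proof. rewrite nbhsE /=; move=> [W [oW Wx] WS]; by exists W. Qed.

End topo.


Section topo2.
Context {T : topologicalType}.

Lemma noclus (F : set_system T) (y : T) : ~ cluster F y ->
  exists G V, F G /\ nbhs y V /\ forall z, G z -> V z -> False.
Proof.
move=> ncl; apply/not_existsP => h; apply: ncl => G V FG NV.
apply/not_existsP => h2; apply: (h G); exists V; split => //; split => // z Gz Vz.
exact: (h2 z (conj Gz Vz)).
Qed.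

Lemma compact_cvg_range (x : T) (xs : nat -> T) :
  xs @ \oo --> x -> compact ([set x] `|` range xs).
Proof.
move=> xsx F PF FK.
case: (pselect (cluster F x)) => [clx|nclx].
  by exists x; split => //; left.
case: (pselect (exists k, cluster F (xs k))) => [[k clk]|ncl].
  by exists (xs k); split => //; right; exists k.
have [A0 [V [FA0 [Vn AV]]]] := noclus nclx.
have [N _ hN] := xsx V Vn.
have fin : forall m, exists G, F G /\ forall k, (k < m)%N -> ~ G (xs k).
  elim=> [|m [G [FG hG]]]; first by exists setT; split => //; exact: filterT.
  have [G' [V' [FG' [NV' hGV']]]] : exists G V, F G /\ nbhs (xs m) V /\ forall z, G z -> V z -> False.
    by apply: noclus => clm; apply: ncl; exists m.
  exists (G `&` G'); split; first exact: filterI.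
  move=> k; rewrite ltnS leq_eqVlt => /orP [/eqP -> [_ Gm]|km [Gk _]].
    by apply: (hGV' _ Gm); exact: nbhs_singleton.
  exact: hG km Gk.
have [G [FG hG]] := fin N.
have [y [[Gy Ay] Ky]] := filter_ex (filterI (filterI FG FA0) FK).
exfalso; case: Ky => [yx|[k _ kx]].
  by rewrite yx in Ay; apply: (AV x Ay); exact: nbhs_singleton.
rewrite -kx in Gy Ay.
case: (ltnP k N) => kN; first exact: hG kN Gy.
by apply: (AV _ Ay); apply: hN.
Qed.

End topo2.


Section main.
Context {R : realType} {X : tvsType R} (hX : hausdorff_space X) (fcX : first_countable X)
  (n : nat) (b : 'I_n -> X) (hb : lin_indep b) (pi : X -> R)
  (hpi : linear_on (span_set b) pi) (A : set X) (U : X) (hU : span_set b U)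
  (piU : pi U = 1) (A2_closed : closed A)
  (A3_fin : forall x, [set pi z | z in [set z | span_set b z /\ A (x + z)]] !=set0 /\
                      has_lbound [set pi z | z in [set z | span_set b z /\ A (x + z)]])
  (A3_cont : continuous (rho (span_set b) A pi)).

Local Notation M := (span_set b).
Local Notation opt := (optR (span_set b) A pi).
Local Notation rh := (rho (span_set b) A pi).

Lemma span_lc c : M (lc b c).
Proof. by exists c. Qed.

Lemma span0 : M 0.
Proof. by exists (fun=> 0); rewrite big1 // => i _; rewrite scale0r. Qed.

Lemma spanLC a y z : M y -> M z -> M (a *: y + z).
Proof. by move=> [c ->] [d ->]; rewrite -/(lc b c) -/(lc b d) lcZ lcD; exact: span_lc. Qed.

Lemma spanD y z : M y -> M z -> M (y + z).
Proof. by move=> hy hz; rewrite -(scale1r y); exact: spanLC. Qed.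

Lemma spanZ a y : M y -> M (a *: y).
Proof. by move=> hy; rewrite -(addr0 (a *: y)); apply: spanLC => //; exact: span0. Qed.

Lemma spanB y z : M y -> M z -> M (y - z).
Proof. by move=> hy hz; apply: spanD => //; rewrite -scaleN1r; exact: spanZ. Qed.

Lemma spanb i : M (b i).
Proof.
exists (fun j => if j == i then 1 else 0).
rewrite (bigD1 i) //= eqxx scale1r big1 ?addr0 // => j /negPf ->; by rewrite scale0r.
Qed.

Lemma pi0 : pi 0 = 0.
Proof.
have := hpi 1 span0 span0; rewrite scale1r addr0 mul1r => h.
by apply: (@addrI _ (pi 0)); rewrite addr0 -h.
Qed.

Lemma piD y z : M y -> M z -> pi (y + z) = pi y + pi z.
Proof. by move=> hy hz; rewrite -{1}(scale1r y) hpi // mul1r. Qed.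

Lemma piZ a y : M y -> pi (a *: y) = a * pi y.
Proof. by move=> hy; rewrite -(addr0 (a *: y)) hpi ?pi0 ?addr0 //; exact: span0. Qed.

Lemma pi_lc c : pi (lc b c) = \sum_i c i * pi (b i).
Proof.
suff H : forall r, M (\sum_(i <- r) c i *: b i) /\
    pi (\sum_(i <- r) c i *: b i) = \sum_(i <- r) c i * pi (b i) by apply: (H _).2.
elim=> [|i r [IH1 IH2]]; first by rewrite !big_nil pi0; split => //; exact: span0.
rewrite !big_cons; split; first by apply: spanD => //; exact: spanZ (spanb i).
by rewrite piD ?piZ ?IH2 //; [exact: spanb | exact: spanZ (spanb i)].
Qed.


Lemma opt_limit (xs : nat -> X) x (c : nat -> 'I_n -> R) d :
  xs @ \oo --> x -> (forall k, opt (xs k) (lc b (c k))) ->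
  (forall i, (fun k => c k i) @ \oo --> d i) -> opt x (lc b d).
Proof.
move=> xsx hopt hcd; split; first exact: span_lc.
split.
- apply: (@closed_cvg nat X \oo _ (fun k => xs k + lc b (c k)) A A2_closed _ (x + lc b d)).
    by apply: nearW => k; have [_ []] := hopt k.
  exact: tcvgD xsx (lc_cvg hcd).
- have h1 : (fun k => pi (lc b (c k))) @ \oo --> rh x.
    have -> : (fun k => pi (lc b (c k))) = (fun k => rh (xs k)).
      by apply: funext => k; have [_ []] := hopt k.
    by apply: continuous_cvg => //; exact: A3_cont.
  have h2 : (fun k => pi (lc b (c k))) @ \oo --> pi (lc b d).
    rewrite pi_lc; under eq_fun do rewrite pi_lc.
    apply: rcvg_sum => i; apply: cvgM => //; exact: cvg_cst.
  apply: (cvg_unique _ h2 h1); exact: norm_hausdorff.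
Qed.

Lemma opt_shift y w a : opt y w -> opt (y + a *: U) (w - a *: U).
Proof.
move=> [Mw [Aw pw]].
have MaU : M (a *: U) := spanZ a hU.
have Mt : M (w - a *: U) := spanB Mw MaU.
have At : A (y + a *: U + (w - a *: U)).
  by rewrite -addrA [X in y + X]addrCA subrr addr0.
have pt : pi (w - a *: U) = rh y - a.
  rewrite -scaleNr piD ?piZ // ?piU ?mulr1 ?pw //; exact: spanZ.
have le1 : rh (y + a *: U) <= pi (w - a *: U).
  by apply: (ge_inf (A3_fin _).2); exists (w - a *: U).
have le2 : rh y - a <= rh (y + a *: U).
  apply: lb_le_inf; first exact: (A3_fin _).1.
  move=> v [z [Mz Az] <-].
  have Mz' : M (z + a *: U) := spanD Mz MaU.
  have : rh y <= pi (z + a *: U).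
    apply: (ge_inf (A3_fin _).2); exists (z + a *: U) => //; split => //.
    by rewrite (addrC z) addrA.
  rewrite piD ?piZ // piU mulr1; lra.
split => //; split => //.
by rewrite pt; apply: le_anti; rewrite le2 -pt le1.
Qed.

Lemma nrm_le (c : 'I_n -> R) D : (forall i, `|c i| <= D) -> nrm c <= D *+ n.
Proof.
move=> h; rewrite /nrm; apply: le_trans (_ : \sum_(i < n) D <= _).
  by apply: ler_sum => i _; exact: h.
by rewrite sumr_const card_ord.
Qed.

Lemma avoid (t : nat -> 'I_n -> R) (p : X) :
  (forall C, exists N, forall k, (N <= k)%N -> C < nrm (t k)) ->
  (forall k, p <> lc b (t k)) ->
  exists N, nbhs p N /\ forall k, ~ N (lc b (t k)).
Proof.
move=> unb hp; apply/not_existsP => hN.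
have [B [hB [dec hbase]]] := fc_base fcX p.
have fin : forall N, exists G, nbhs p G /\ forall k, (k < N)%N -> ~ G (lc b (t k)).
  elim=> [|N [G [hG Gt]]]; first by exists setT; split => //; exact: filterT.
  have [H [hH Ht]] := hsep hX (hp N).
  exists (G `&` H); split; first exact: filterI.
  move=> k; rewrite ltnS leq_eqVlt => /orP [/eqP -> [_ //] | kN [Gk _]]; exact: Gt kN Gk.
have claim : forall j N, exists k, (N <= k)%N /\ B j (lc b (t k)).
  move=> j N; apply/not_existsP => hk.
  have [G [hG Gt]] := fin N.
  apply: (hN (G `&` B j)); split; first exact: filterI.
  move=> k [Gk Bk]; case: (ltnP k N) => kN; first exact: Gt kN Gk.
  by apply: (hk k).
have [phi [hphi hphiB]] := freq_subseq claim.
have cv : (fun j => lc b (t (phi j))) @ \oo --> p.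
  exact: base_cvg dec hbase hphiB.
have [D hD] := hard hX hb cv.
have [N0 hN0] := unb (D *+ n).
have := hN0 (phi N0) (sincr_ge hphi N0).
by rewrite ltNge nrm_le.
Qed.

Lemma usc_contra x (ys : nat -> X) (t : nat -> 'I_n -> R) :
  (forall C, exists N, forall k, (N <= k)%N -> C < nrm (t k)) ->
  ys @ \oo --> x -> (forall k, opt (ys k) (lc b (t k))) ->
  (forall p k, opt x p -> p <> lc b (t k)) -> ~ usc_at M A pi x.
Proof.
move=> unb ysx hopt hp husc.
pose S := range (fun k => lc b (t k)).
pose V := ~` closure S.
have oV : open V by apply: closed_openC; exact: closed_closure.
have sub : opt x `<=` V `&` M.
  move=> p op; split; last by case: op.
  have [N [hN Nt]] := avoid unb (fun k => hp p k op).
  move=> cl; have [q [[k _ <-] Nq]] := cl N hN; exact: Nt k Nq.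
have [W [oW [Wx hW]]] := husc V oV sub.
have [N _ hN] : \forall k \near \oo, W (ys k).
  by apply: ysx; apply: open_nbhs_nbhs.
have [VN _] := hW (ys N) (hN N (leqnn N)) (lc b (t N)) (hopt N).
by apply: VN; apply: subset_closure; exists N.
Qed.

Lemma harm_le1 k : harmonic k <= 1 :> R.
Proof. by rewrite /harmonic /= invf_le1 ?ltr0Sn // ler1n. Qed.

Lemma usc_bounded x : (forall y, usc_at M A pi y) ->
  exists C, forall c, opt x (lc b c) -> nrm c <= C.
Proof.
move=> husc; have [u hu] := hU.
have hUe : U = lc b u := hu.
apply/not_existsP => hC.
have ex : forall k : nat, exists c, opt x (lc b c) /\ k%:R + nrm u < nrm c.
  move=> k; apply/not_existsP => hk; apply: (hC (k%:R + nrm u)) => c oc.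
  rewrite leNgt; apply/negP => lt; exact: (hk c (conj oc lt)).
have [w hw] := choice ex.
pose t k i := w k i - harmonic k * u i.
have lt k : lc b (t k) = lc b (w k) - harmonic k *: U by rewrite hUe lcZ lcB.
apply: (usc_contra (ys := fun k => x + harmonic k *: U) (t := t) _ _ _ _ (husc x)).
- move=> C; have [N _ hN] := nbhs_infty_ger C; exists N => k Nk.
  have h1 := hN k Nk.
  have h2 : nrm (w k) <= nrm (t k) + nrm u.
    rewrite /nrm -big_split /=; apply: ler_sum => i _.
    have -> : w k i = t k i + harmonic k * u i by rewrite /t subrK.
    apply: le_trans (ler_normD _ _) _; rewrite lerD2l normrM.
    rewrite ger0_norm ?harmonic_ge0 //; apply: ler_piMl => //.
    exact: harm_le1.
  have h3 := (hw k).2; lra.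
- rewrite -[x in _ --> x]addr0; apply: tcvgD; first exact: cvg_cst.
  rewrite -(scale0r U); apply: tcvgZ; [exact: cvg_harmonic | exact: cvg_cst].
- by move=> k; rewrite lt; apply: opt_shift; exact: (hw k).1.
- move=> p k [_ [_ pp]] e.
  have [_ [_ pw]] := (hw k).1.
  have : pi (lc b (t k)) = pi (lc b (w k)) - harmonic k.
    rewrite lt -scaleNr piD ?piZ ?piU ?mulr1 //; [exact: span_lc | exact: spanZ].
  rewrite -e pp pw => h; have := @harmonic_gt0 R k; lra.
Qed.

Definition propC := forall (x : X) (xs zs : nat -> X), xs @ \oo --> x ->
          (forall k, opt (xs k) (zs k)) ->
          exists z, exists phi : nat -> nat, opt x z /\
            {homo phi : k l / (k < l)%N} /\ (zs \o phi) @ \oo --> z.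

Lemma a_to_c : (forall y, usc_at M A pi y) -> propC.
Proof.
move=> husc x xs zs xsx hz.
have hz' : forall k, exists c, zs k = lc b c.
  by move=> k; have [c1 e1] := (hz k).1; exists c1.
have [c hc] := choice hz'.
case: (pselect (exists C, forall N, exists k, (N <= k)%N /\ nrm (c k) <= C)) => [[C hC]|nb].
- have [phi [hphi hphib]] := freq_subseq (fun _ => hC).
  have [psi [hpsi [d hd]]] := bw_multi (c := fun j => c (phi j)) (C := C)
    (fun j i => le_trans (nrm_ge _ i) (hphib j)).
  exists (lc b d), (phi \o psi); split; [|split].
  + apply: (opt_limit (xs := fun j => xs (phi (psi j))) (c := fun j => c (phi (psi j)))) => //.
      have := cvg_subs (sincr_comp hphi hpsi) xsx; exact.
    by move=> k; rewrite -hc.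
  + exact: sincr_comp.
  + have -> : zs \o (phi \o psi) = (fun j => lc b (c (phi (psi j)))).
      by apply: funext => j; rewrite /= hc.
    exact: lc_cvg hd.
- exfalso.
  have unb : forall C, exists N, forall k, (N <= k)%N -> C < nrm (c k).
    move=> C; apply/not_existsP => h; apply: nb; exists C => N.
    apply/not_existsP => h2; apply: (h N) => k Nk; rewrite ltNge; apply/negP => le.
    exact: (h2 k (conj Nk le)).
  have [Cx hCx] := usc_bounded x husc.
  have [N0 hN0] := unb Cx.
  apply: (usc_contra (ys := fun k => xs (k + N0)) (t := fun k => c (k + N0)) _ _ _ _ (husc x)).
  + move=> C; have [N hN] := unb C; exists N => k Nk; apply: hN.
    exact: leq_trans Nk (leq_addr _ _).
  + have := ge_cvg (g := fun k => (k + N0)%N) (fun k => leq_addr _ _) xsx; exact.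
  + by move=> k; rewrite -hc.
  + move=> p k op e; rewrite e in op.
    have := hCx _ op; have := hN0 (k + N0)%N (leq_addl _ _).
    by rewrite ltNge => /negP.
Qed.

Lemma c_to_a : propC -> forall x, usc_at M A pi x.
Proof.
move=> hc x V oV sub.
apply/not_existsP => hW.
have [B [hB [dec hbase]]] := fc_base fcX x.
have ex : forall j, exists yz : X * X, B j yz.1 /\ opt yz.1 yz.2 /\ ~ V yz.2.
  move=> j; have [W [oW [Wx WB]]] := nbhs_open (hB j).
  apply/not_existsP => hj; apply: (hW W); split => //; split => // y Wy z oz.
  split; last by case: oz.
  have [//|nVz] := pselect (V z).
  by exfalso; apply: (hj (y, z)); split => //; exact: WB.
have [f hf] := choice ex.
have ysx : (fun j => (f j).1) @ \oo --> x := base_cvg dec hbase (fun j => (hf j).1).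
have [z [phi [oz [hphi zcv]]]] := hc x _ (fun j => (f j).2) ysx (fun j => (hf j).2.1).
have Vz : V z := (sub z oz).1.
have [N _ hN] : \forall j \near \oo, V (((fun j => (f j).2) \o phi) j).
  by apply: zcv; exact: open_nbhs_nbhs.
exact: (hf (phi N)).2.2 (hN N (leqnn N)).
Qed.

Lemma b_to_c : (forall K : set X, compact K -> bounded_in_span b (optR_set M A pi K)) -> propC.
Proof.
move=> hbd x xs zs xsx hz.
have cK := compact_cvg_range xsx.
have [C hC] := hbd _ cK.
have ex : forall k, exists c, zs k = lc b c /\ forall i, `|c i| <= C.
  move=> k; have [|c [e1 e2]] := hC (zs k); last by exists c.
  by exists (xs k); [right; exists k | exact: hz].
have [c hc] := choice ex.
have [phi [hphi [d hd]]] := bw_multi (fun k i => (hc k).2 i).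
exists (lc b d), phi; split; [|split] => //.
- apply: (opt_limit (xs := xs \o phi) (c := fun k => c (phi k))) => //.
    exact: cvg_subs hphi xsx.
  by move=> k; rewrite /= -(hc _).1.
- have -> : zs \o phi = (fun k => lc b (c (phi k))).
    by apply: funext => k; rewrite /= (hc _).1.
  exact: lc_cvg.
Qed.

Lemma c_to_b : propC -> forall K : set X, compact K -> bounded_in_span b (optR_set M A pi K).
Proof.
move=> hc K cK; apply/not_existsP => hC.
have ex : forall k : nat, exists xz : X * ('I_n -> R),
    K xz.1 /\ opt xz.1 (lc b xz.2) /\ k%:R < nrm xz.2.
  move=> k; apply/not_existsP => hk; apply: (hC k%:R) => z [y Ky oz].
  have [c zc] := oz.1; exists c; split => // i.
  apply: le_trans (nrm_ge c i) _; rewrite leNgt; apply/negP => lt.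
  by apply: (hk (y, c)); split => //; split => //; rewrite /lc -zc.
have [f hf] := choice ex.
pose xs := fun k => (f k).1.
have [p [Kp clp]] : exists p, K p /\ cluster (xs @ \oo) p.
  have [|p [Kp clp]] := cK (xs @ \oo) _.
    by exists 0%N => // k _; exact: (hf k).1.
  by exists p.
have [B [hB [dec hbase]]] := fc_base fcX p.
have claim : forall j N, exists k, (N <= k)%N /\ B j (xs k).
  move=> j N.
  have [|y [[k Nk <-] Bk]] := clp (xs @` [set k | (N <= k)%N]) (B j) _ (hB j).
    by exists N => // k Nk; exists k.
  by exists k.
have [phi [hphi hphiB]] := freq_subseq claim.
have cv : (xs \o phi) @ \oo --> p := base_cvg dec hbase hphiB.
have [z [psi [_ [hpsi zcv]]]] := hc p (xs \o phi) (fun k => lc b (f (phi k)).2) cv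
  (fun k => (hf (phi k)).2.1).
have [D hD] := hard hX hb (e := fun k => (f (phi (psi k))).2) zcv.
have [N _ hN] := nbhs_infty_ger (D *+ n).
have h1 := hN N (leqnn N).
have h2 : (N <= phi (psi N))%N := sincr_ge (sincr_comp hphi hpsi) N.
have h3 := nrm_le (hD N).
have h4 := (hf (phi (psi N))).2.2.
have h5 : N%:R <= (phi (psi N))%:R :> R by rewrite ler_nat.
have := lt_le_trans h4 (le_trans h3 (le_trans h1 h5)).
by rewrite ltxx.
Qed.

End main.

Unset Implicit Arguments. Set Strict Implicit.

Theorem mainTheorem15 (R : realType) (X : tvsType R)
  (hX : hausdorff_space X) (fcX : first_countable X)
  (le : X -> X -> Prop) (hle : partial_order le)
  (n : nat) (b : 'I_n -> X) (hb : lin_indep b) (hn : (1 < n)%N)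
  (pi : X -> R) (hpi : linear_on (span_set b) pi)
  (A : set X)
  (A1 : exists U, span_set b U /\ pos_cone le U /\ pi U = 1)
  (A2_closed : closed A) (A2_proper : A != setT) (A2_0 : A 0)
  (A2_mon : forall a p, A a -> pos_cone le p -> A (a + p))
  (A3_fin : forall x, [set pi z | z in [set z | span_set b z /\ A (x + z)]] !=set0 /\
                      has_lbound [set pi z | z in [set z | span_set b z /\ A (x + z)]])
  (A3_cont : continuous (rho (span_set b) A pi)) :
  let M := span_set b in
  [/\ ((forall x, usc_at M A pi x) <->
       (forall K : set X, compact K -> bounded_in_span b (optR_set M A pi K))),
      ((forall K : set X, compact K -> bounded_in_span b (optR_set M A pi K)) <->
       (forall (x : X) (xs zs : nat -> X), xs @ \oo --> x ->
          (forall k, optR M A pi (xs k) (zs k)) ->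
          exists z, exists phi : nat -> nat, optR M A pi x z /\
            {homo phi : k l / (k < l)%N} /\ (zs \o phi) @ \oo --> z))
    & ((forall x, usc_at M A pi x) <->
       (forall (x : X) (xs zs : nat -> X), xs @ \oo --> x ->
          (forall k, optR M A pi (xs k) (zs k)) ->
          exists z, exists phi : nat -> nat, optR M A pi x z /\
            {homo phi : k l / (k < l)%N} /\ (zs \o phi) @ \oo --> z))].
Proof.
move=> M.
have [U [hU [_ piU]]] := A1.
have AC := a_to_c hX fcX hb hpi hU piU A2_closed A3_fin A3_cont.
have CA := c_to_a fcX (b:=b) (pi:=pi) (A:=A).
have BC := b_to_c hpi A2_closed A3_cont.
have CB := c_to_b hX fcX hb (pi:=pi) (A:=A).
split; split.
- by move=> ha K cK; exact: CB (AC ha) K cK.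
- by move=> hbd x; exact: CA (BC hbd) x.
- exact: BC.
- by move=> hc K cK; exact: CB hc K cK.
- exact: AC.
- by move=> hc x; exact: CA hc x.
Qed.
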